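(* Let $\chi,b,\nu,\mu>0$ with $b\ge\frac32\chi\mu$, and $c\in\mathbb{R}$. Let $r$ be globally Hölder continuous and bounded with $r^*:=\sup_{\mathbb{R}}r>0$, finite limits $r(\pm\infty)<0$, and $\min\{r(\infty),r(-\infty)\}\le r(x)$ for all $x$. Fix $\bar r$ with $\max\{r(-\infty),r(\infty)\}<\bar r<0$, a point $\bar x$ with $r(x)<\bar r$ for all $x<\bar x$, a point $\tilde x$ with $r(x)<\bar r$ for all $x>\tilde x$, let $\bar\theta$ be the positive root of $\theta^2+c\theta+\bar r=0$ and $\tilde\theta$ the positive root of $\theta^2-c\theta+\bar r=0$. Then for every $u\in\mathcal{E}_2^+$: $\mathcal{A}_u\big(\frac{r^*}{b-\chi\mu}e^{\bar\theta(\cdot-\bar x)}\big)(x)\le0$ for $x\in(-\infty,\bar x)$; $\mathcal{A}_u\big(\frac{r^*}{b-\chi\mu}\big)(x)\le0$ for $x\in\mathbb{R}$; and $\mathcal{A}_u\big(\frac{r^*}{b-\chi\mu}e^{-\tilde\theta(\cdot-\tilde x)}\big)(x)\le0$ for $x\in(\tilde x,\infty)$.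
   Context: $C^b_{\rm unif}(\mathbb{R})$: bounded uniformly continuous functions on $\mathbb{R}$. $\Psi(x;u)=\frac{\mu}{2\sqrt\nu}\int_{\mathbb{R}}e^{-\sqrt\nu|x-y|}u(y)dy$ (bounded solution of $\Psi''-\nu\Psi+\mu u=0$). $U_2^+(x)=\frac{r^*}{b-\chi\mu}e^{\bar\theta(x-\bar x)}$ for $x<\bar x$, $=\frac{r^*}{b-\chi\mu}$ for $\bar x\le x\le\tilde x$, $=\frac{r^*}{b-\chi\mu}e^{-\tilde\theta(x-\tilde x)}$ for $x>\tilde x$; $\mathcal{E}_2^+=\{u\in C^b_{\rm unif}(\mathbb{R}):0\le u(x)\le U_2^+(x)\ \forall x\}$. For $u\in\mathcal{E}_2^+$, $\mathcal{A}_u(U)(x)=U_{xx}+(c-\chi\Psi_x(x;u))U_x+(r(x)-\chi\nu\Psi(x;u)-(b-\chi\mu)U)U$. *)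

(* Defs.v *)
From Stdlib Require Import Reals.
From Coquelicot Require Import Coquelicot.
Open Scope R_scope.

Definition Psi (mu nu : R) (u : R -> R) (x : R) : R :=
  mu / (2 * sqrt nu) *
  RInt_gen (fun y => exp (- sqrt nu * Rabs (x - y)) * u y)
           (Rbar_locally m_infty) (Rbar_locally p_infty).

Definition Psi_x (mu nu : R) (u : R -> R) (x : R) : R :=
  Derive (Psi mu nu u) x.

Definition A_op (chi mu nu b c : R) (r : R -> R) (u U : R -> R) (x : R) : R :=
  Derive_n U 2 x + (c - chi * Psi_x mu nu u x) * Derive U x
  + (r x - chi * nu * Psi mu nu u x - (b - chi * mu) * U x) * U x.

Definition U2plus (chi mu b rstar thb tht xb xt : R) (x : R) : R :=
  if Rlt_dec x xb then rstar / (b - chi * mu) * exp (thb * (x - xb))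
  else if Rle_dec x xt then rstar / (b - chi * mu)
  else rstar / (b - chi * mu) * exp (- tht * (x - xt)).

Definition bounded_unif_cont (u : R -> R) : Prop :=
  (exists M, forall x, Rabs (u x) <= M) /\
  (forall eps, 0 < eps -> exists delta, 0 < delta /\
     forall x y, Rabs (x - y) < delta -> Rabs (u x - u y) < eps).

Definition E2plus (chi mu b rstar thb tht xb xt : R) (u : R -> R) : Prop :=
  bounded_unif_cont u /\
  forall x, 0 <= u x <= U2plus chi mu b rstar thb tht xb xt x.

Definition globally_Holder (r : R -> R) : Prop :=
  exists alpha L, 0 < alpha <= 1 /\ 0 <= L /\
    forall x y, x <> y -> Rabs (r x - r y) <= L * Rpower (Rabs (x - y)) alpha.

Definition bounded_fun (r : R -> R) : Prop := exists M, forall x, Rabs (r x) <= M.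

Definition is_sup_fun (r : R -> R) (s : R) : Prop :=
  (forall x, r x <= s) /\ (forall e, 0 < e -> exists x, s - e < r x).

(* Main.v *)
Require Import Defs.
From Stdlib Require Import Reals.
From Coquelicot Require Import Coquelicot.
From Stdlib Require Import Lra Psatz Classical_Pred_Type.
Open Scope R_scope.


Lemma buc_cont (u : R -> R) : bounded_unif_cont u -> forall x, continuous u x.
Proof.
intros [_ H] x. apply continuity_pt_filterlim.
intros eps Heps. destruct (H eps Heps) as [d [Hd Hu]].
exists d. split; [exact Hd|]. intros y [_ Hy]. unfold R_dist in *.
apply Hu. exact Hy.
Qed.

Lemma ball_R (L e y : R) : Rabs (y - L) < e -> ball L e y.
Proof. intros H. exact H. Qed.

Lemma lim_incr_p (F : R -> R) (M : R) :
  (forall a b, a <= b -> F a <= F b) -> (forall b, F b <= M) ->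
  exists L, filterlim F (Rbar_locally p_infty) (locally L).
Proof.
intros Hm Hb.
destruct (completeness (fun y => exists b, y = F b)) as [L [HL1 HL2]].
- exists M. intros y [b ->]. apply Hb.
- exists (F 0). exists 0. reflexivity.
- exists L. intros P [eps HP].
  assert (Hex : exists b0, L - eps < F b0).
  { destruct (Rlt_or_le (L - eps) L) as [_|Hc]; [|pose proof (cond_pos eps); lra].
    apply Classical_Pred_Type.not_all_not_ex. intros Hn.
    assert (L <= L - eps). { apply HL2. intros y [b ->]. apply Rnot_lt_le, Hn. }
    pose proof (cond_pos eps); lra. }
  destruct Hex as [b0 Hb0]. exists b0. intros x Hx. apply HP. apply ball_R.
  assert (F x <= L) by (apply HL1; exists x; reflexivity).
  assert (F b0 <= F x) by (apply Hm; lra).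
  apply Rabs_def1; lra.
Qed.

Lemma lim_decr_m (F : R -> R) (M : R) :
  (forall a b, a <= b -> F b <= F a) -> (forall b, F b <= M) ->
  exists L, filterlim F (Rbar_locally m_infty) (locally L).
Proof.
intros Hm Hb.
destruct (completeness (fun y => exists b, y = F b)) as [L [HL1 HL2]].
- exists M. intros y [b ->]. apply Hb.
- exists (F 0). exists 0. reflexivity.
- exists L. intros P [eps HP].
  assert (Hex : exists b0, L - eps < F b0).
  { apply Classical_Pred_Type.not_all_not_ex. intros Hn.
    assert (L <= L - eps). { apply HL2. intros y [b ->]. apply Rnot_lt_le, Hn. }
    pose proof (cond_pos eps); lra. }
  destruct Hex as [b0 Hb0]. exists b0. intros x Hx. apply HP. apply ball_R.
  assert (F x <= L) by (apply HL1; exists x; reflexivity).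
  assert (F b0 <= F x) by (apply Hm; lra).
  apply Rabs_def1; lra.
Qed.

Lemma gen_p (f : R -> R) a L : (forall b, ex_RInt f a b) ->
  filterlim (fun b => RInt f a b) (Rbar_locally p_infty) (locally L) ->
  is_RInt_gen f (at_point a) (Rbar_locally p_infty) L.
Proof.
intros He Hl P HP. specialize (Hl P HP).
apply Filter_prod with (Q := fun x => x = a) (R := fun b => P (RInt f a b)).
- reflexivity.
- exact Hl.
- intros x y -> Hy. exists (RInt f a y). split; [exact (RInt_correct _ _ _ (He _))|exact Hy].
Qed.

Lemma gen_m (f : R -> R) a L : (forall b, ex_RInt f b a) ->
  filterlim (fun b => RInt f b a) (Rbar_locally m_infty) (locally L) ->
  is_RInt_gen f (Rbar_locally m_infty) (at_point a) L.
Proof.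
intros He Hl P HP. specialize (Hl P HP).
apply Filter_prod with (R := fun x => x = a) (Q := fun b => P (RInt f b a)).
- exact Hl.
- reflexivity.
- intros y x Hy ->. exists (RInt f y a). split; [exact (RInt_correct _ _ _ (He _))|exact Hy].
Qed.

Lemma gen_nonneg (f : R -> R) Fa Fb l :
  ProperFilter Fa -> ProperFilter Fb ->
  filter_prod Fa Fb (fun ab => fst ab <= snd ab) ->
  (forall y, 0 <= f y) -> is_RInt_gen f Fa Fb l -> 0 <= l.
Proof.
intros HA HB Hle Hf H.
assert (Hn : norm l <= l).
{ apply (RInt_gen_norm f f l l Hle); [|exact H|exact H].
  apply filter_forall. intros ab y _. simpl. unfold norm; simpl. unfold abs; simpl.
  rewrite Rabs_pos_eq; [lra|apply Hf]. }
unfold norm in Hn; simpl in Hn; unfold abs in Hn; simpl in Hn.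
pose proof (Rabs_pos l). lra.
Qed.

Lemma exd_cont (f : R -> R) x : ex_derive f x -> continuous f x.
Proof. intros H. exact (@ex_derive_continuous R_AbsRing R_NormedModule f x H). Qed.

Lemma exRc (f : R -> R) a b : (forall z, Rmin a b <= z <= Rmax a b -> continuous f z) -> ex_RInt f a b.
Proof. intros H. exact (@ex_RInt_continuous R_CompleteNormedModule f a b H). Qed.

Lemma cont_ek (u : R -> R) (k : R) : (forall x, continuous u x) ->
  forall y, continuous (fun y => exp (k * y) * u y) y.
Proof.
intros Hu y. apply (continuous_mult (fun y => exp (k*y)) u); [|apply Hu].
apply exd_cont. auto_derive. trivial.
Qed.

Lemma ex_ek (u : R -> R) (k : R) : (forall x, continuous u x) ->
  forall a b, ex_RInt (fun y => exp (k * y) * u y) a b.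
Proof. intros Hu a b. apply exRc. intros z _. apply cont_ek, Hu. Qed.

Lemma RInt_Mexp (M k a b : R) : k <> 0 ->
  RInt (fun y => M * exp (k * y)) a b = M / k * exp (k * b) - M / k * exp (k * a).
Proof.
intros Hk. apply is_RInt_unique.
assert (H := is_RInt_derive (fun y => M / k * exp (k * y)) (fun y => M * exp (k * y)) a b).
unfold minus, plus, opp in H; simpl in H. apply H.
- intros x _. auto_derive; trivial. field. exact Hk.
- intros x _. apply exd_cont. auto_derive. trivial.
Qed.

Lemma exA (u : R -> R) s M : 0 < s -> (forall x, continuous u x) ->
  (forall y, 0 <= u y <= M) ->
  exists A0, is_RInt_gen (fun y => exp (- s * y) * u y) (at_point 0) (Rbar_locally p_infty) A0.
Proof.
intros Hs Hu Hb. set (phi := fun y => exp (- s * y) * u y).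
assert (He : forall a b, ex_RInt phi a b) by (apply ex_ek, Hu).
assert (Hmono : forall a b, a <= b -> RInt phi 0 a <= RInt phi 0 b).
{ intros a b Hab. rewrite <- (RInt_Chasles phi 0 a b) by apply He.
  assert (0 <= RInt phi a b).
  { apply RInt_ge_0; [exact Hab|apply He|]. intros x _. unfold phi.
    apply Rmult_le_pos; [left; apply exp_pos|apply Hb]. }
  change (plus (RInt phi 0 a) (RInt phi a b)) with (RInt phi 0 a + RInt phi a b). lra. }
assert (Hpos : forall b, 0 <= b -> RInt phi 0 b <= M / s).
{ intros b Hb0.
  assert (RInt phi 0 b <= RInt (fun y => M * exp (- s * y)) 0 b).
  { apply RInt_le; [exact Hb0|apply He| |].
    - apply exRc. intros z _. apply exd_cont. auto_derive. trivial.
    - intros x _. unfold phi. rewrite Rmult_comm. apply Rmult_le_compat_r; [left; apply exp_pos|apply Hb]. }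
  rewrite RInt_Mexp in H by lra. rewrite Rmult_0_r, exp_0 in H.
  replace (M / - s) with (- (M / s)) in H by (field; lra).
  assert (0 <= M). { destruct (Hb 0). lra. }
  assert (0 <= M / s * exp (- s * b)).
  { apply Rmult_le_pos; [apply Rdiv_le_0_compat; lra|left; apply exp_pos]. }
  lra. }
destruct (lim_incr_p (fun b => RInt phi 0 b) (M / s)) as [L HL]; [exact Hmono| |].
- intros b. destruct (Rle_or_lt 0 b) as [H|H]; [apply Hpos, H|].
  apply Rle_trans with (RInt phi 0 0); [apply Hmono; lra|apply Hpos; lra].
- exists L. apply gen_p; [apply He|exact HL].
Qed.

Lemma exB (u : R -> R) s M : 0 < s -> (forall x, continuous u x) ->
  (forall y, 0 <= u y <= M) ->
  exists B0, is_RInt_gen (fun y => exp (s * y) * u y) (Rbar_locally m_infty) (at_point 0) B0.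
Proof.
intros Hs Hu Hb. set (psi := fun y => exp (s * y) * u y).
assert (He : forall a b, ex_RInt psi a b) by (apply ex_ek, Hu).
assert (Hmono : forall a b, a <= b -> RInt psi b 0 <= RInt psi a 0).
{ intros a b Hab. rewrite <- (RInt_Chasles psi a b 0) by apply He.
  assert (0 <= RInt psi a b).
  { apply RInt_ge_0; [exact Hab|apply He|]. intros x _. unfold psi.
    apply Rmult_le_pos; [left; apply exp_pos|apply Hb]. }
  change (plus (RInt psi a b) (RInt psi b 0)) with (RInt psi a b + RInt psi b 0). lra. }
assert (Hpos : forall a, a <= 0 -> RInt psi a 0 <= M / s).
{ intros a Ha0.
  assert (RInt psi a 0 <= RInt (fun y => M * exp (s * y)) a 0).
  { apply RInt_le; [exact Ha0|apply He| |].
    - apply exRc. intros z _. apply exd_cont. auto_derive. trivial.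
    - intros x _. unfold psi. rewrite Rmult_comm. apply Rmult_le_compat_r; [left; apply exp_pos|apply Hb]. }
  rewrite RInt_Mexp in H by lra. rewrite Rmult_0_r, exp_0 in H.
  assert (0 <= M). { destruct (Hb 0). lra. }
  assert (0 <= M / s * exp (s * a)).
  { apply Rmult_le_pos; [apply Rdiv_le_0_compat; lra|left; apply exp_pos]. }
  lra. }
destruct (lim_decr_m (fun b => RInt psi b 0) (M / s)) as [L HL]; [exact Hmono| |].
- intros b. destruct (Rle_or_lt b 0) as [H|H]; [apply Hpos, H|].
  apply Rle_trans with (RInt psi 0 0); [apply Hmono; lra|apply Hpos; lra].
- exists L. apply gen_m; [intros; apply He|exact HL].
Qed.


Lemma full_int (u : R -> R) s A0 B0 x : (forall x, continuous u x) ->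
  is_RInt_gen (fun y => exp (- s * y) * u y) (at_point 0) (Rbar_locally p_infty) A0 ->
  is_RInt_gen (fun y => exp (s * y) * u y) (Rbar_locally m_infty) (at_point 0) B0 ->
  is_RInt_gen (fun y => exp (- s * Rabs (x - y)) * u y) (Rbar_locally m_infty) (Rbar_locally p_infty)
   (exp (- s * x) * (B0 + RInt (fun y => exp (s * y) * u y) 0 x)
    + exp (s * x) * (A0 - RInt (fun y => exp (- s * y) * u y) 0 x)).
Proof.
intros Hu HA HB.
set (phi := fun y => exp (- s * y) * u y) in *.
set (psi := fun y => exp (s * y) * u y) in *.
assert (Hep : forall a b, ex_RInt phi a b) by (apply ex_ek, Hu).
assert (Hes : forall a b, ex_RInt psi a b) by (apply ex_ek, Hu).
assert (HL : is_RInt_gen psi (Rbar_locally m_infty) (at_point x) (plus B0 (RInt psi 0 x))).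
{ apply (is_RInt_gen_Chasles psi 0); [exact HB|].
  apply is_RInt_gen_at_point. exact (RInt_correct _ _ _ (Hes 0 x)). }
assert (HR : is_RInt_gen phi (at_point x) (Rbar_locally p_infty) (plus (RInt phi x 0) A0)).
{ apply (is_RInt_gen_Chasles phi 0); [|exact HA].
  apply is_RInt_gen_at_point. exact (RInt_correct _ _ _ (Hep x 0)). }
assert (Hsw : RInt phi x 0 = - RInt phi 0 x).
{ rewrite <- (opp_RInt_swap phi 0 x (Hep 0 x)). reflexivity. }
apply (is_RInt_gen_scal _ (exp (- s * x))) in HL.
apply (is_RInt_gen_scal _ (exp (s * x))) in HR.
assert (HL' : is_RInt_gen (fun y => exp (- s * Rabs (x - y)) * u y) (Rbar_locally m_infty) (at_point x)
   (exp (- s * x) * (B0 + RInt psi 0 x))).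
{ refine (is_RInt_gen_ext _ _ _ _ HL).
  apply Filter_prod with (Q := fun a => a < x) (R := fun b => b = x).
  - exists x. intros; lra.
  - reflexivity.
  - intros a b Ha ->. intros y [Hy1 Hy2]. simpl in *.
    rewrite Rmax_right in Hy2 by lra.
    rewrite Rabs_pos_eq by lra. unfold scal; simpl; unfold mult; simpl. unfold psi.
    rewrite <- Rmult_assoc, <- exp_plus. f_equal. f_equal. ring. }
assert (HR' : is_RInt_gen (fun y => exp (- s * Rabs (x - y)) * u y) (at_point x) (Rbar_locally p_infty)
   (exp (s * x) * (A0 - RInt phi 0 x))).
{ replace (exp (s * x) * (A0 - RInt phi 0 x)) with (scal (exp (s * x)) (plus (RInt phi x 0) A0)).
  2:{ unfold scal, plus; simpl; unfold mult, plus; simpl. rewrite Hsw. ring. }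
  refine (is_RInt_gen_ext _ _ _ _ HR).
  apply Filter_prod with (R := fun a => x < a) (Q := fun b => b = x).
  - reflexivity.
  - exists x. intros; lra.
  - intros a b -> Hb. intros y [Hy1 Hy2]. simpl in *.
    rewrite Rmin_left in Hy1 by lra.
    rewrite Rabs_minus_sym, Rabs_pos_eq by lra. unfold scal; simpl; unfold mult; simpl. unfold phi.
    rewrite <- Rmult_assoc, <- exp_plus. f_equal. f_equal. ring. }
exact (is_RInt_gen_Chasles _ x _ _ HL' HR').
Qed.


Lemma left_piece (u : R -> R) s B0 x : (forall x, continuous u x) ->
  is_RInt_gen (fun y => exp (s * y) * u y) (Rbar_locally m_infty) (at_point 0) B0 ->
  is_RInt_gen (fun y => exp (s * y) * u y) (Rbar_locally m_infty) (at_point x)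
    (B0 + RInt (fun y => exp (s * y) * u y) 0 x).
Proof.
intros Hu HB.
set (psi := fun y => exp (s * y) * u y) in *.
assert (Hes : forall a b, ex_RInt psi a b) by (apply ex_ek, Hu).
apply (is_RInt_gen_Chasles psi 0); [exact HB|].
apply is_RInt_gen_at_point. exact (RInt_correct _ _ _ (Hes 0 x)).
Qed.

Lemma right_piece (u : R -> R) s A0 x : (forall x, continuous u x) ->
  is_RInt_gen (fun y => exp (- s * y) * u y) (at_point 0) (Rbar_locally p_infty) A0 ->
  is_RInt_gen (fun y => exp (- s * y) * u y) (at_point x) (Rbar_locally p_infty)
    (A0 - RInt (fun y => exp (- s * y) * u y) 0 x).
Proof.
intros Hu HA.
set (phi := fun y => exp (- s * y) * u y) in *.
assert (Hep : forall a b, ex_RInt phi a b) by (apply ex_ek, Hu).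
assert (Hsw : RInt phi x 0 = - RInt phi 0 x).
{ rewrite <- (opp_RInt_swap phi 0 x (Hep 0 x)). reflexivity. }
replace (A0 - RInt phi 0 x) with (plus (RInt phi x 0) A0).
2:{ unfold plus; simpl. rewrite Hsw. ring. }
apply (is_RInt_gen_Chasles phi 0); [|exact HA].
apply is_RInt_gen_at_point. exact (RInt_correct _ _ _ (Hep x 0)).
Qed.


Lemma Psi_der (u : R -> R) s k A0 B0 x : (forall x, continuous u x) ->
  is_derive (fun x => k * (exp (- s * x) * (B0 + RInt (fun y => exp (s * y) * u y) 0 x)
    + exp (s * x) * (A0 - RInt (fun y => exp (- s * y) * u y) 0 x))) x
   (k * s * (exp (s * x) * (A0 - RInt (fun y => exp (- s * y) * u y) 0 x)
            - exp (- s * x) * (B0 + RInt (fun y => exp (s * y) * u y) 0 x))).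
Proof.
intros Hu.
set (phi := fun y => exp (- s * y) * u y).
set (psi := fun y => exp (s * y) * u y).
assert (Hep : forall a b, ex_RInt phi a b) by (apply ex_ek, Hu).
assert (Hes : forall a b, ex_RInt psi a b) by (apply ex_ek, Hu).
assert (D1 : is_derive (RInt psi 0) x (psi x)).
{ apply (is_derive_RInt psi (RInt psi 0) 0 x).
  - apply filter_forall. intros b. exact (RInt_correct _ _ _ (Hes 0 b)).
  - apply cont_ek, Hu. }
assert (D2 : is_derive (RInt phi 0) x (phi x)).
{ apply (is_derive_RInt phi (RInt phi 0) 0 x).
  - apply filter_forall. intros b. exact (RInt_correct _ _ _ (Hep 0 b)).
  - apply cont_ek, Hu. }
auto_derive.
- split; [apply Hes|]. split; [apply filter_forall; intros y; apply continuity_pt_filterlim, cont_ek, Hu|].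
  split; [apply Hep|]. split; [apply filter_forall; intros y; apply continuity_pt_filterlim, cont_ek, Hu|]. exact I.
- unfold phi, psi.
  replace (exp (- s * x) * (1 * (exp (s * x) * u x))) with (u x).
  2:{ rewrite Rmult_1_l, <- Rmult_assoc, <- exp_plus. replace (- s * x + s * x) with 0 by ring. rewrite exp_0. ring. }
  replace (exp (s * x) * - (1 * (exp (- s * x) * u x))) with (- u x).
  2:{ rewrite Rmult_1_l, Ropp_mult_distr_r_reverse, <- Rmult_assoc, <- exp_plus. replace (s * x + - s * x) with 0 by ring. rewrite exp_0. ring. }
  ring.
Qed.


Lemma small_exp (D k z eps : R) : 0 < k -> 0 < eps ->
  k * z < ln (eps / (Rabs D + 1)) -> Rabs (D * exp (k * z)) < eps.
Proof.
intros Hk He Hz. pose proof (Rabs_pos D).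
assert (Ha : 0 < Rabs D + 1) by lra.
assert (exp (k * z) < eps / (Rabs D + 1)).
{ rewrite <- (exp_ln (eps / (Rabs D + 1))) by (apply Rdiv_lt_0_compat; lra).
  apply exp_increasing, Hz. }
rewrite Rabs_mult, (Rabs_pos_eq (exp _)) by (left; apply exp_pos).
pose proof (exp_pos (k * z)).
apply Rle_lt_trans with ((Rabs D + 1) * exp (k * z)); [nra|].
apply Rmult_lt_compat_l with (r := Rabs D + 1) in H0; [|lra].
replace ((Rabs D + 1) * (eps / (Rabs D + 1))) with eps in H0 by (field; lra). exact H0.
Qed.

Lemma lim_m (D k : R) : 0 < k ->
  filterlim (fun y => D * exp (k * y)) (Rbar_locally m_infty) (locally 0).
Proof.
intros Hk P [eps HP]. pose proof (cond_pos eps).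
exists (ln (eps / (Rabs D + 1)) / k). intros y Hy. apply HP. apply ball_R.
rewrite Rminus_0_r. apply small_exp; [exact Hk|exact H|].
apply Rmult_lt_compat_l with (r := k) in Hy; [|exact Hk].
replace (k * (ln (eps / (Rabs D + 1)) / k)) with (ln (eps / (Rabs D + 1))) in Hy by (field; lra). exact Hy.
Qed.

Lemma lim_p (D k : R) : 0 < k ->
  filterlim (fun y => D * exp (- k * y)) (Rbar_locally p_infty) (locally 0).
Proof.
intros Hk P [eps HP]. pose proof (cond_pos eps).
exists (- (ln (eps / (Rabs D + 1)) / k)). intros y Hy. apply HP. apply ball_R.
rewrite Rminus_0_r. replace (- k * y) with (k * (- y)) by ring. apply small_exp; [exact Hk|exact H|].
assert (- y < ln (eps / (Rabs D + 1)) / k) by lra.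
apply Rmult_lt_compat_l with (r := k) in H0; [|exact Hk].
replace (k * (ln (eps / (Rabs D + 1)) / k)) with (ln (eps / (Rabs D + 1))) in H0 by (field; lra). exact H0.
Qed.

Lemma bound_m (f : R -> R) x l C k : 0 < k ->
  is_RInt_gen f (Rbar_locally m_infty) (at_point x) l ->
  (forall y, y <= x -> Rabs (f y) <= C * exp (k * y)) -> l <= C / k * exp (k * x).
Proof.
intros Hk Hf Hb.
set (F := fun y => C / k * exp (k * y)).
assert (HD : forall y, is_derive F y (C * exp (k * y))).
{ intros y. unfold F. auto_derive; trivial. field. lra. }
assert (HDe : forall y, Derive F y = C * exp (k * y)) by (intros; apply is_derive_unique, HD).
assert (Hg : is_RInt_gen (Derive F) (Rbar_locally m_infty) (at_point x) (F x - 0)).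
{ apply is_RInt_gen_Derive.
  - apply filter_forall. intros ab y _. exists (C * exp (k * y)). apply HD.
  - apply filter_forall. intros ab y _.
    apply (continuous_ext (fun y => C * exp (k * y))); [intros; rewrite HDe; reflexivity|].
    apply exd_cont. auto_derive. trivial.
  - apply lim_m, Hk.
  - intros P HP. apply locally_singleton in HP. exact HP. }
assert (Hn : norm l <= F x - 0).
{ apply (@RInt_gen_norm R_CompleteNormedModule (Rbar_locally m_infty) (at_point x) _ _ f (Derive F) l (F x - 0)); [| |exact Hf|exact Hg].
  - apply Filter_prod with (Q := fun a => a < x) (R := fun b => b = x).
    + exists x. intros; lra.
    + reflexivity.
    + intros a b Ha ->. simpl. lra.
  - apply Filter_prod with (Q := fun a => a < x) (R := fun b => b = x).
    + exists x. intros; lra.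
    + reflexivity.
    + intros a b Ha -> y [Hy1 Hy2]. simpl in *. rewrite HDe. apply Hb. exact Hy2. }
unfold norm in Hn; simpl in Hn; unfold abs in Hn; simpl in Hn.
pose proof (Rle_abs l). unfold F in Hn. lra.
Qed.

Lemma bound_p (f : R -> R) x l C k : 0 < k ->
  is_RInt_gen f (at_point x) (Rbar_locally p_infty) l ->
  (forall y, x <= y -> Rabs (f y) <= C * exp (- k * y)) -> l <= C / k * exp (- k * x).
Proof.
intros Hk Hf Hb.
set (F := fun y => - (C / k) * exp (- k * y)).
assert (HD : forall y, is_derive F y (C * exp (- k * y))).
{ intros y. unfold F. auto_derive; trivial. field. lra. }
assert (HDe : forall y, Derive F y = C * exp (- k * y)) by (intros; apply is_derive_unique, HD).
assert (Hg : is_RInt_gen (Derive F) (at_point x) (Rbar_locally p_infty) (0 - F x)).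
{ apply is_RInt_gen_Derive.
  - apply filter_forall. intros ab y _. exists (C * exp (- k * y)). apply HD.
  - apply filter_forall. intros ab y _.
    apply (continuous_ext (fun y => C * exp (- k * y))); [intros; rewrite HDe; reflexivity|].
    apply exd_cont. auto_derive. trivial.
  - intros P HP. apply locally_singleton in HP. exact HP.
  - apply lim_p, Hk. }
assert (Hn : norm l <= 0 - F x).
{ apply (@RInt_gen_norm R_CompleteNormedModule (at_point x) (Rbar_locally p_infty) _ _ f (Derive F) l (0 - F x)); [| |exact Hf|exact Hg].
  - apply Filter_prod with (R := fun a => x < a) (Q := fun b => b = x).
    + reflexivity.
    + exists x. intros; lra.
    + intros a b -> Hb'. simpl. lra.
  - apply Filter_prod with (R := fun a => x < a) (Q := fun b => b = x).
    + reflexivity.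
    + exists x. intros; lra.
    + intros a b -> Hb' y [Hy1 Hy2]. simpl in *. rewrite HDe. apply Hb. exact Hy1. }
unfold norm in Hn; simpl in Hn; unfold abs in Hn; simpl in Hn.
pose proof (Rle_abs l). unfold F in Hn. lra.
Qed.


Lemma alg1 (U th c rb r chi mu s b L1 L2 P Pp nu : R) :
  0 < U -> 0 < chi -> 0 < mu -> 0 < s -> 0 < th -> th ^ 2 + c * th + rb = 0 ->
  r < rb -> b >= 3 / 2 * chi * mu -> 0 <= L1 -> 0 <= L2 -> L1 * (s + th) <= U ->
  nu = s * s -> P = mu / (2 * s) * (L1 + L2) -> Pp = mu / (2 * s) * s * (L2 - L1) ->
  th ^ 2 * U + (c - chi * Pp) * (th * U) + (r - chi * nu * P - (b - chi * mu) * U) * U <= 0.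
Proof.
intros HU Hc Hm Hs Ht Hq Hr Hb H1 H2 H3 -> -> ->.
replace (mu / (2 * s) * s) with (mu / 2) by (field; lra).
replace (chi * (s * s) * (mu / (2 * s) * (L1 + L2))) with (chi * mu * s / 2 * (L1 + L2)) by (field; lra).
assert (Br : th ^ 2 + c * th + r - chi * (mu / 2 * (L2 - L1)) * th - chi * mu * s / 2 * (L1 + L2) - (b - chi * mu) * U <= 0).
{ assert (th * L1 <= U) by nra.
  assert (0 <= chi * mu) by nra.
  assert (chi * mu * (th * L1) <= chi * mu * U) by nra.
  assert (0 <= chi * mu * ((th + s) * L2)) by (apply Rmult_le_pos; nra).
  assert (0 <= chi * mu * (s * L1)) by (apply Rmult_le_pos; nra).
  nra. }
replace (th ^ 2 * U + (c - chi * (mu / 2 * (L2 - L1))) * (th * U) +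
  (r - chi * mu * s / 2 * (L1 + L2) - (b - chi * mu) * U) * U)
 with (U * (th ^ 2 + c * th + r - chi * (mu / 2 * (L2 - L1)) * th - chi * mu * s / 2 * (L1 + L2) - (b - chi * mu) * U)) by ring.
nra.
Qed.


Lemma D1_exp K a b x : Derive (fun y => K * exp (a * (y - b))) x = K * a * exp (a * (x - b)).
Proof. apply is_derive_unique. auto_derive; trivial. unfold Rminus; ring. Qed.

Lemma D2_exp K a b x : Derive_n (fun y => K * exp (a * (y - b))) 2 x = K * a ^ 2 * exp (a * (x - b)).
Proof.
simpl. rewrite (Derive_ext _ (fun y => K * a * exp (a * (y - b)))).
- apply is_derive_unique. auto_derive; trivial. unfold Rminus; ring.
- intros t. apply D1_exp.
Qed.

Theorem lemma4p1
  (chi b nu mu c : R) (r : R -> R) (rstar rp rm rbar xb xt thb tht : R)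
  (Hchi : 0 < chi) (Hb : 0 < b) (Hnu : 0 < nu) (Hmu : 0 < mu)
  (Hbchi : b >= 3 / 2 * chi * mu)
  (Hhold : globally_Holder r) (Hbdd : bounded_fun r)
  (Hsup : is_sup_fun r rstar) (Hrstar : 0 < rstar)
  (Hlimp : is_lim r p_infty rp) (Hlimm : is_lim r m_infty rm)
  (Hrp : rp < 0) (Hrm : rm < 0)
  (Hmin : forall x, Rmin rp rm <= r x)
  (Hrbar1 : Rmax rm rp < rbar) (Hrbar2 : rbar < 0)
  (Hxb : forall x, x < xb -> r x < rbar)
  (Hxt : forall x, x > xt -> r x < rbar)
  (Hthb : 0 < thb /\ thb ^ 2 + c * thb + rbar = 0)
  (Htht : 0 < tht /\ tht ^ 2 - c * tht + rbar = 0) :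
  forall u : R -> R, E2plus chi mu b rstar thb tht xb xt u ->
    (forall x, x < xb ->
       A_op chi mu nu b c r u
         (fun y => rstar / (b - chi * mu) * exp (thb * (y - xb))) x <= 0) /\
    (forall x,
       A_op chi mu nu b c r u (fun _ => rstar / (b - chi * mu)) x <= 0) /\
    (forall x, x > xt ->
       A_op chi mu nu b c r u
         (fun y => rstar / (b - chi * mu) * exp (- tht * (y - xt))) x <= 0).
Proof.
intros u [Hbuc Hu01].
assert (Hxbt : xb <= xt).
{ destruct Hsup as [_ Hs2]. destruct (Hs2 rstar Hrstar) as [z Hz].
  destruct (Rlt_or_le z xb) as [H|H]; [specialize (Hxb z H); lra|].
  destruct (Rle_or_lt z xt) as [H'|H']; [lra|specialize (Hxt z H'); lra]. }
assert (Hbcm : 0 < b - chi * mu) by nra.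
set (K := rstar / (b - chi * mu)).
assert (HK : 0 < K) by (apply Rdiv_lt_0_compat; lra).
assert (HKr : (b - chi * mu) * K = rstar) by (unfold K; field; lra).
assert (Hcu := buc_cont u Hbuc).
destruct Hbuc as [[M HM] _].
assert (Hu0M : forall y, 0 <= u y <= M).
{ intros y. split; [apply Hu01|]. specialize (HM y). apply Rabs_le_between in HM. lra. }
set (s := sqrt nu).
assert (Hs : 0 < s) by (apply sqrt_lt_R0, Hnu).
assert (Hnus : nu = s * s) by (unfold s; rewrite sqrt_sqrt; lra).
destruct (exA u s M Hs Hcu Hu0M) as [A0 HA].
destruct (exB u s M Hs Hcu Hu0M) as [B0 HB].
set (phi := fun y => exp (- s * y) * u y).
set (psi := fun y => exp (s * y) * u y).
set (L1 := fun x => exp (- s * x) * (B0 + RInt psi 0 x)).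
set (L2 := fun x => exp (s * x) * (A0 - RInt phi 0 x)).
assert (HP : forall x, Psi mu nu u x = mu / (2 * s) * (L1 x + L2 x)).
{ intros x. unfold Psi. fold s. f_equal.
  apply is_RInt_gen_unique. apply full_int; assumption. }
assert (HPx : forall x, Psi_x mu nu u x = mu / (2 * s) * s * (L2 x - L1 x)).
{ intros x. unfold Psi_x. rewrite (Derive_ext _ _ x HP).
  apply is_derive_unique. apply Psi_der. exact Hcu. }
assert (HL1 : forall x, 0 <= L1 x).
{ intros x. unfold L1. apply Rmult_le_pos; [left; apply exp_pos|].
  apply (gen_nonneg psi (Rbar_locally m_infty) (at_point x)); [apply Rbar_locally_filter|apply at_point_filter| | |].
  - apply Filter_prod with (Q := fun a => a < x) (R := fun b => b = x).
    + exists x. intros; lra.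
    + reflexivity.
    + intros a b' Ha ->. simpl. lra.
  - intros y. unfold psi. apply Rmult_le_pos; [left; apply exp_pos|apply Hu0M].
  - apply left_piece; assumption. }
assert (HL2 : forall x, 0 <= L2 x).
{ intros x. unfold L2. apply Rmult_le_pos; [left; apply exp_pos|].
  apply (gen_nonneg phi (at_point x) (Rbar_locally p_infty)); [apply at_point_filter|apply Rbar_locally_filter| | |].
  - apply Filter_prod with (R := fun a => x < a) (Q := fun b => b = x).
    + reflexivity.
    + exists x. intros; lra.
    + intros a b' -> Hb'. simpl. lra.
  - intros y. unfold phi. apply Rmult_le_pos; [left; apply exp_pos|apply Hu0M].
  - apply right_piece; assumption. }
split; [|split].
-
  intros x Hx. unfold A_op. fold K.
  rewrite D2_exp, D1_exp, HP, HPx.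
  set (E := exp (thb * (x - xb))).
  assert (HE : 0 < E) by apply exp_pos.
  assert (HB1 : L1 x * (s + thb) <= K * E).
  { assert (Hbd := bound_m psi x (B0 + RInt psi 0 x) (K * exp (- thb * xb)) (s + thb) ltac:(lra)
      (left_piece u s B0 x Hcu HB)).
    assert (Hbd' : B0 + RInt psi 0 x <= K * exp (- thb * xb) / (s + thb) * exp ((s + thb) * x)).
    { apply Hbd. intros y Hy. unfold psi.
      rewrite Rabs_pos_eq by (apply Rmult_le_pos; [left; apply exp_pos|apply Hu0M]).
      assert (Huy : u y <= K * exp (thb * (y - xb))).
      { destruct (Hu01 y) as [_ H]. unfold U2plus in H. destruct (Rlt_dec y xb); [exact H|lra]. }
      replace (K * exp (- thb * xb) * exp ((s + thb) * y)) with (exp (s * y) * (K * exp (thb * (y - xb)))).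
      2:{ replace (K * exp (- thb * xb) * exp ((s + thb) * y)) with (K * (exp (- thb * xb) * exp ((s + thb) * y))) by ring.
          rewrite <- exp_plus. replace (exp (s * y) * (K * exp (thb * (y - xb)))) with (K * (exp (s * y) * exp (thb * (y - xb)))) by ring.
          rewrite <- exp_plus. f_equal. f_equal. ring. }
      apply Rmult_le_compat_l; [left; apply exp_pos|exact Huy]. }
    unfold L1.
    apply Rmult_le_compat_l with (r := exp (- s * x)) in Hbd'; [|left; apply exp_pos].
    replace (exp (- s * x) * (K * exp (- thb * xb) / (s + thb) * exp ((s + thb) * x))) with (K * E / (s + thb)) in Hbd'.
    2:{ unfold E. replace (thb * (x - xb)) with (- s * x + (- thb * xb + (s + thb) * x)) by ring.
        rewrite !exp_plus. field. lra. }
    apply Rmult_le_compat_r with (r := s + thb) in Hbd'; [|lra].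
    replace (K * E / (s + thb) * (s + thb)) with (K * E) in Hbd' by (field; lra). exact Hbd'. }
  replace (K * thb ^ 2 * E) with (thb ^ 2 * (K * E)) by ring.
  replace (K * thb * E) with (thb * (K * E)) by ring.
  apply (alg1 (K * E) thb c rbar (r x) chi mu s b (L1 x) (L2 x)); try tauto; try lra.
  all: try first [apply Rmult_lt_0_compat; lra | apply Hxb; exact Hx | apply HL1 | apply HL2].
- intros x. unfold A_op. rewrite Derive_const.
  replace (Derive_n (fun _ : R => K) 2 x) with 0.
  2:{ simpl. rewrite (Derive_ext _ (fun _ => 0)); [|intros; apply Derive_const]. symmetry; apply Derive_const. }
  rewrite HP. pose proof (HL1 x). pose proof (HL2 x).
  assert (r x <= rstar) by apply Hsup.
  assert (0 <= chi * nu * (mu / (2 * s) * (L1 x + L2 x))).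
  { apply Rmult_le_pos; [nra|]. apply Rmult_le_pos; [|lra]. apply Rdiv_le_0_compat; lra. }
  rewrite HKr. nra.
-   intros x Hx. unfold A_op. fold K.
  rewrite D2_exp, D1_exp, HP, HPx.
  set (E := exp (- tht * (x - xt))).
  assert (HE : 0 < E) by apply exp_pos.
  assert (HB1 : L2 x * (s + tht) <= K * E).
  { assert (Hbd := bound_p phi x (A0 - RInt phi 0 x) (K * exp (tht * xt)) (s + tht) ltac:(lra)
      (right_piece u s A0 x Hcu HA)).
    assert (Hbd' : A0 - RInt phi 0 x <= K * exp (tht * xt) / (s + tht) * exp (- (s + tht) * x)).
    { apply Hbd. intros y Hy. unfold phi.
      rewrite Rabs_pos_eq by (apply Rmult_le_pos; [left; apply exp_pos|apply Hu0M]).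
      assert (Huy : u y <= K * exp (- tht * (y - xt))).
      { destruct (Hu01 y) as [_ H]. unfold U2plus in H. destruct (Rlt_dec y xb); [lra|].
        destruct (Rle_dec y xt); [lra|exact H]. }
      replace (K * exp (tht * xt) * exp (- (s + tht) * y)) with (exp (- s * y) * (K * exp (- tht * (y - xt)))).
      2:{ replace (K * exp (tht * xt) * exp (- (s + tht) * y)) with (K * (exp (tht * xt) * exp (- (s + tht) * y))) by ring.
          rewrite <- exp_plus. replace (exp (- s * y) * (K * exp (- tht * (y - xt)))) with (K * (exp (- s * y) * exp (- tht * (y - xt)))) by ring.
          rewrite <- exp_plus. f_equal. f_equal. ring. }
      apply Rmult_le_compat_l; [left; apply exp_pos|exact Huy]. }
    unfold L2.
    apply Rmult_le_compat_l with (r := exp (s * x)) in Hbd'; [|left; apply exp_pos].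
    replace (exp (s * x) * (K * exp (tht * xt) / (s + tht) * exp (- (s + tht) * x))) with (K * E / (s + tht)) in Hbd'.
    2:{ unfold E. replace (- tht * (x - xt)) with (s * x + (tht * xt + - (s + tht) * x)) by ring.
        rewrite !exp_plus. field. lra. }
    apply Rmult_le_compat_r with (r := s + tht) in Hbd'; [|lra].
    replace (K * E / (s + tht) * (s + tht)) with (K * E) in Hbd' by (field; lra). exact Hbd'. }
  assert (Hq : tht ^ 2 + - c * tht + rbar = 0) by (destruct Htht as [_ Hq]; rewrite <- Hq; ring).
  assert (Hal := alg1 (K * E) tht (- c) rbar (r x) chi mu s b (L2 x) (L1 x)
     (mu / (2 * s) * (L2 x + L1 x)) (mu / (2 * s) * s * (L1 x - L2 x)) nu
     ltac:(apply Rmult_lt_0_compat; lra) Hchi Hmu Hs ltac:(tauto) Hq ltac:(apply Hxt, Hx)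
     Hbchi (HL2 x) (HL1 x) HB1 Hnus eq_refl eq_refl).
  match goal with |- ?G <= 0 => replace G with
    (tht ^ 2 * (K * E) + (- c - chi * (mu / (2 * s) * s * (L1 x - L2 x))) * (tht * (K * E)) +
     (r x - chi * nu * (mu / (2 * s) * (L2 x + L1 x)) - (b - chi * mu) * (K * E)) * (K * E)) by ring end.
  exact Hal.
Qed.
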